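(* For $1\le\ell\le n$ let $\gamma_\ell=(\gamma^\ell_{ij})_{ij}\in\bigoplus_{1\le i\ne j\le n}\mathrm{Sym}_{\mathbb{Z}}T^*$ with $\gamma^\ell_{ij}=\delta_{i,\ell}\prod_{s\ne i,j}\alpha_{is}$. Then: (i) $\gamma_\ell$ lies in (the image of) $\mathrm{CH}^{n-2}_{T_L}(Y_L)$; (ii) $\widehat\sigma\gamma_\ell=\gamma_{\sigma(\ell)}$ for every $\sigma\in\Gamma_L$; (iii) $\langle\gamma_k,\gamma_\ell\rangle_{Y_L}=(-1)^{n-2}\delta_{k,\ell}$ for all $1\le k,\ell\le n$.
   Context: Setting: $n\ge3$, $F$ a field with $n\in F^\times$ containing a primitive $n$-th root of unity $\zeta$; $a,b\in F^\times$, $L=F[\sqrt[n]{a}]$ cyclic Galois of degree $n$, $\Gamma_L=\mathrm{Gal}(L/F)$, mapped to $S_n$ by sending the generator $\eta$ ($\eta(\sqrt[n]{a})=\zeta\sqrt[n]{a}$) to the cycle $(1\,2\cdots n)$. $A$, $X$, $Y=\{uI_1\subset I_{n-1}\}\subset X$ as before (cyclic algebra $A=F\langle u,v\rangle/\langle u^n=a,v^n=b,uv=\zeta vu\rangle$, $X$ the pairs of right ideals of reduced dimension $1$ and $n-1$). $T$ diagonal torus of $\mathrm{PGL}_n$, $t_i\colon\mathrm{diag}(z_k)\mapsto z_i^{-1}$, $\alpha_{ij}=t_i-t_j$; $\sigma\in S_n$ acts on $T^*$ by $t_i\mapsto t_{\sigma(i)}$. $\mathrm{CH}_{T_L}(Y_L)$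 is identified with $\{(\varphi_{ij})_{i\ne j}:\alpha\mid\varphi_{ij}-\varphi_{kh}$ for each edge $[ij]\overset{\alpha}{-}[kh]\}$, the edges being $[ij]\overset{\alpha_{jk}}{-}[ik]$ and $[ij]\overset{\alpha_{ik}}{-}[kj]$ for distinct $i,j,k$; grading by polynomial degree. $\widehat\sigma((\varphi_{ij}))=(\sigma\varphi_{\sigma^{-1}(i)\sigma^{-1}(j)})$ is the monodromy action. The equivariant pairing is $\langle\varphi,\psi\rangle_{Y_L}=\sum_{i\ne j}\varphi_{ij}\psi_{ij}/\prod_{s\ne i,j}\alpha_{is}\alpha_{sj}$. *)

(* Defs.v *)
From HB Require Import structures.
From mathcomp Require Import all_boot all_order all_fingroup all_algebra.
From mathcomp Require Import fraction mpoly.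
Set Implicit Arguments. Unset Strict Implicit. Unset Printing Implicit Defensive.
Import GRing.Theory.
Local Open Scope ring_scope.

(* Ambient ring Z[t_0,...,t_{n-1}] (indices shifted to 0..n-1); t_i = 'X_i. *)
Notation Zt n := {mpoly int[n]}.

Definition alpha (n : nat) (i j : 'I_n) : Zt n := 'X_i - 'X_j.

(* Sym_Z T^* as a subring of Z[t]: the subring generated by the
   characters alpha_{i,i+1} (which generate the lattice T^* of PGL_n),
   i.e. polynomial expressions with integer coefficients in them. *)
Definition inSymT (n : nat) (p : Zt n) : Prop :=
  exists q : Zt n, p = q \mPo [tuple alpha i (ordS i) | i < n].

Definition symdvd (n : nat) (a f : Zt n) : Prop :=
  exists q : Zt n, inSymT q /\ f = a * q.

(* families (phi_ij)_{i <> j}; diagonal entries are ignored *)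
Definition family (n : nat) := 'I_n -> 'I_n -> Zt n.

(* CH^d_{T_L}(Y_L): families with entries in Sym T^* homogeneous of degree d
   satisfying the GKM edge conditions
   [ij] -alpha_jk- [ik] and [ij] -alpha_ik- [kj] for distinct i,j,k. *)
Definition inCH (n d : nat) (phi : family n) : Prop :=
  (forall i j : 'I_n, i != j -> inSymT (phi i j) /\ phi i j \is d.-homog) /\
  (forall i j k : 'I_n, i != j -> j != k -> i != k ->
     symdvd (alpha j k) (phi i j - phi i k) /\
     symdvd (alpha i k) (phi i j - phi k j)).

(* monodromy action: (sigma^ phi)_ij = sigma(phi_{sigma^-1 i, sigma^-1 j}),
   sigma acting on Sym T^* by t_i |-> t_{sigma i} (msym s maps 'X_i to 'X_(s i)) *)
Definition monodromy (n : nat) (s : 'S_n) (phi : family n) : family n :=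
  fun i j => msym s (phi ((s^-1)%g i) ((s^-1)%g j)).

Notation tofrac := (@FracField.tofrac _).

Definition pairing (n : nat) (phi psi : family n) : {fraction Zt n} :=
  \sum_(i : 'I_n) \sum_(j : 'I_n | i != j)
     (tofrac (phi i j * psi i j) /
      tofrac (\prod_(s : 'I_n | (s != i) && (s != j)) (alpha i s * alpha s j))).

Definition gamma (n : nat) (l : 'I_n) : family n :=
  fun i j => if i == l then \prod_(s : 'I_n | (s != i) && (s != j)) alpha i s
             else 0.

(* image of eta in S_n: the n-cycle i |-> i+1 (mod n);
   Gamma_L is identified with the cyclic subgroup <[cyc n]> *)
Definition cyc (n : nat) : 'S_n := perm (@ordS_inj n).

(* Main.v *)
Require Import Defs.
From HB Require Import structures.
From mathcomp Require Import all_boot all_order all_fingroup all_algebra.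
From mathcomp Require Import fraction mpoly zify ring.
Import GRing.Theory.
Local Open Scope ring_scope.
Set Implicit Arguments. Unset Strict Implicit.
Lemma card_predD1 (I : finType) (P : pred I) j : P j ->
  #|[pred s | P s && (s != j)]| = (#|P| - 1)%N.
Proof.
move=> Pj; rewrite [#|P|](cardD1 j) unfold_in Pj add1n subn1 /=.
by apply/eq_card => s; rewrite !inE andbC.
Qed.
Section S.
Variable n : nat.
Local Notation tup := [tuple alpha i (@ordS n i) | i < n].

Lemma sym0 : inSymT (0 : Zt n).
Proof. by exists 0; rewrite raddf0. Qed.
Lemma sym1 : inSymT (1 : Zt n).
Proof. by exists 1; rewrite rmorph1. Qed.
Lemma symD (p q : Zt n) : inSymT p -> inSymT q -> inSymT (p + q).
Proof. by move=> [a ->] [b ->]; exists (a + b); rewrite raddfD. Qed.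
Lemma symN (p : Zt n) : inSymT p -> inSymT (- p).
Proof. by move=> [a ->]; exists (- a); rewrite raddfN. Qed.
Lemma symM (p q : Zt n) : inSymT p -> inSymT q -> inSymT (p * q).
Proof. by move=> [a ->] [b ->]; exists (a * b); rewrite rmorphM. Qed.
Lemma symS (i : 'I_n) : inSymT (alpha i (ordS i)).
Proof. by exists 'X_i; rewrite comp_mpolyXU -(tnth_nth 0) tnth_mktuple. Qed.

Lemma iter_ordS (i : 'I_n) k : val (iter k (@ordS n) i) = ((i + k) %% n)%N.
Proof.
elim: k => [|k IH] /=; first by rewrite addn0 modn_small.
by rewrite IH -addn1 modnDml addn1 addnS.
Qed.

Lemma symA (i j : 'I_n) : inSymT (alpha i j).
Proof.
have H : forall k, inSymT (alpha i (iter k (@ordS n) i)).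
  elim=> [|k IH] /=; first by rewrite /alpha subrr; exact: sym0.
  have -> : alpha i (ordS (iter k (ordS (n:=n)) i)) =
     alpha i (iter k (ordS (n:=n)) i) + alpha (iter k (ordS (n:=n)) i) (ordS (iter k (ordS (n:=n)) i)).
    by rewrite /alpha addrA subrK.
  by apply: symD => //; exact: symS.
have -> : j = iter (j + n - i) (@ordS n) i.
  apply: val_inj; rewrite iter_ordS /= addnBA; last by rewrite ltnW // ltn_addl.
  by rewrite addKn modnDr modn_small.
exact: H.
Qed.

Lemma symP (I : finType) (P : pred I) (F : I -> Zt n) :
  (forall s, P s -> inSymT (F s)) -> inSymT (\prod_(s | P s) F s).
Proof. move=> H; apply: (big_ind (@inSymT n)) => //; [exact: sym1|exact: symM]. Qed.

Lemma homA (i j : 'I_n) : alpha i j \is 1.-homog.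
Proof. rewrite /alpha rpredB // dhomogX; apply/eqP; apply: mdeg1. Qed.

Lemma homP (I : finType) (P : pred I) (F : I -> Zt n) :
  (forall s, P s -> F s \is 1.-homog) -> \prod_(s | P s) F s \is #|P|.-homog.
Proof.
move=> H; rewrite -big_filter cardE /enum_mem.
have := filter_all P (index_enum I).
elim: (filter _ _) => [|a r IH] /=; first by rewrite big_nil dhomog1.
case/andP=> Pa Hr; rewrite big_cons -add1n; apply: dhomogM; first exact: H.
exact: IH.
Qed.

End S.
Lemma msymXi n (s : 'S_n) (i : 'I_n) : msym s ('X_i : Zt n) = 'X_(s i).
Proof. by rewrite /msym mmapX mmap1U. Qed.

Lemma part2 n (s : 'S_n) (l i j : 'I_n) :
  monodromy s (gamma l) i j = gamma (s l) i j.
Proof.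
rewrite /monodromy /gamma.
have -> : ((s^-1)%g i == l) = (i == s l) by rewrite eq_sym -(canF_eq (permKV s)) eq_sym.
case: eqP => [->|_]; last by rewrite msym0.
rewrite rmorph_prod /=.
rewrite (reindex_inj (@perm_inj _ (s^-1)%g)) /=.
apply: eq_big => u.
  by rewrite !(inj_eq (@perm_inj _ (s^-1)%g)).
by move=> _; rewrite /alpha msymB !msymXi !permKV.
Qed.

Lemma cardij n (i j : 'I_n) : i != j ->
  #|[pred s | (s != i) && (s != j)]| = (n - 2)%N.
Proof.
move=> ij; have := @card_predD1 _ (predC1 i) j.
rewrite /= eq_sym ij => /(_ isT); rewrite cardC1 card_ord => E.
have -> : (n - 2 = n.-1 - 1)%N by lia.
by rewrite -E; apply: eq_card => s; rewrite !inE.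
Qed.

Definition Cp n (i j k : 'I_n) : Zt n :=
  \prod_(s | (s != i) && (s != j) && (s != k)) alpha i s.

Lemma CpC n (i j k : 'I_n) : Cp i j k = Cp i k j.
Proof. by apply: eq_bigl => s; case: (s != i); case: (s != j); case: (s != k). Qed.

Lemma CpS n (i j k : 'I_n) : inSymT (Cp i j k).
Proof. by apply: symP => s _; apply: symA. Qed.

Lemma prodD n (i j k : 'I_n) : k != i -> k != j ->
  \prod_(s | (s != i) && (s != j)) alpha i s = alpha i k * Cp i j k.
Proof. by move=> ki kj; rewrite (bigD1 k) //= ki kj. Qed.

Lemma part1 n (l : 'I_n) : inCH (n - 2) (gamma l).
Proof.
split.
  move=> i j ij; rewrite /gamma; case: (i == l).
    split; first by apply: symP => s _; apply: symA.
    have := homP (P := fun s => (s != i) && (s != j)) (F := alpha i) (fun s _ => homA i s).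
    by rewrite (eq_card (B := [pred s | (s != i) && (s != j)])) // cardij.
  by split; [exact: sym0 | exact: rpred0].
move=> i j k ij jk ik; rewrite /gamma; split.
all: have ki : k != i by rewrite eq_sym.
all: have kj : k != j by rewrite eq_sym.
all: have ji : j != i by rewrite eq_sym.
  case: (i == l).
    exists (Cp i j k); split; first exact: CpS.
    rewrite (prodD ki kj) (prodD ji jk) CpC /alpha; ring.
  by exists 0; split; [exact: sym0 | rewrite subrr mulr0].
have [il|il] := eqVneq i l; have [kl|kl] := eqVneq k l.
- by move: ik; rewrite il kl eqxx.
- exists (Cp l j k); split; first exact: CpS.
  by rewrite -il (prodD ki kj) subr0.
- exists (Cp l j i); split; first exact: CpS.
  by rewrite -kl (prodD ik ij) /alpha; ring.
- by exists 0; split; [exact: sym0 | rewrite subrr mulr0].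
Qed.
Lemma lagr (F : fieldType) (I : finType) (P : pred I) (x : I -> F) (y : F) :
  {in P &, injective x} -> (0 < #|P|)%N ->
  \sum_(j | P j) \prod_(s | P s && (s != j)) ((y - x s) / (x j - x s)) = 1.
Proof.
move=> xinj P0.
have nz : forall j s, P j -> P s -> s != j -> x j - x s != 0.
  move=> j s Pj Ps sj; rewrite subr_eq0; apply/eqP => /xinj.
  by move=> /(_ Pj Ps) E; rewrite E eqxx in sj.
pose c j := \prod_(s | P s && (s != j)) (x j - x s)^-1.
pose L j := \prod_(s | P s && (s != j)) ('X - (x s)%:P).
pose q := \sum_(j | P j) c j *: L j.
have qy : forall z, q.[z] = \sum_(j | P j) \prod_(s | P s && (s != j)) ((z - x s) / (x j - x s)).
  move=> z; rewrite horner_sum; apply: eq_bigr => j Pj.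
  rewrite hornerZ horner_prod /c -big_split /=; apply: eq_bigr => s _.
  by rewrite hornerXsubC mulrC.
rewrite -qy.
suff -> : q = 1 by rewrite hornerC.
apply/eqP; rewrite -subr_eq0; apply/eqP.
apply: (@roots_geq_poly_eq0 _ _ [seq x j | j <- enum P]).
- apply/allP => z /mapP [i]; rewrite mem_enum => Pi ->.
  rewrite /root hornerD hornerN hornerC qy subr_eq0 (bigD1 i) //=.
  rewrite [X in _ + X]big1 ?addr0.
    apply/eqP; apply: big1 => s /andP [Ps si].
    by rewrite divff // nz.
  move=> j /andP [Pj ji]; rewrite (bigD1 i) /=; last by rewrite eq_sym ji andbT; move: Pi; rewrite unfold_in.
  by rewrite subrr mul0r mul0r.
- rewrite map_inj_in_uniq ?enum_uniq // => a b; rewrite !mem_enum; exact: xinj.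
- rewrite size_map -cardE.
  apply: (leq_trans (size_polyD _ _)); rewrite geq_max size_polyN size_poly1 P0 andbT.
  apply: (leq_trans (size_sum _ _ _)); apply/bigmax_leqP => j Pj.
  apply: (leq_trans (size_scale_leq _ _)).
  rewrite size_prod; last by move=> s _; rewrite polyXsubC_eq0.
  rewrite (eq_bigr (fun=> 2%N)); last by move=> s _; rewrite size_XsubC.
  rewrite sum_nat_const card_predD1 //.
  lia.
Qed.

Lemma X_inj n (a b : 'I_n) : ('X_a : Zt n) = 'X_b -> a = b.
Proof.
move=> /(congr1 (fun p : Zt n => p@_U_(a))); rewrite !mcoeffX eqxx.
case: eqP => [/(congr1 (fun m : 'X_{1..n} => m a))|]; last first.
  by move=> _ /eqP; rewrite oner_eq0.
by move=> + _; rewrite !mnmE eqxx; case: eqP.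
Qed.

Section P3.
Variable n : nat.
Local Notation T i := (tofrac ('X_i : Zt n)).

Lemma T_inj : injective (fun i : 'I_n => T i).
Proof. by move=> a b /eqP; rewrite tofrac_eq => /eqP /X_inj. Qed.

Lemma Tsub_neq0 (a b : 'I_n) : a != b -> T a - T b != 0.
Proof. by move=> ab; rewrite subr_eq0; apply: contra ab => /eqP /T_inj ->. Qed.

Lemma term_eq (k j : 'I_n) : k != j ->
  tofrac (\prod_(s | (s != k) && (s != j)) alpha k s * \prod_(s | (s != k) && (s != j)) alpha k s) /
  tofrac (\prod_(s | (s != k) && (s != j)) (alpha k s * alpha s j)) =
  (-1) ^+ (n - 2) * \prod_(s | (k != s) && (s != j)) ((T k - T s) / (T j - T s)).
Proof.
move=> kj.
rewrite -big_split /= !rmorph_prod -prodf_div.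
rewrite (eq_bigr (fun s => - ((T k - T s) / (T j - T s)))); last first.
  move=> s /andP [sk sj]; rewrite /alpha !rmorphM !rmorphB /=.
  rewrite -mulf_div divff ?mul1r; last by rewrite Tsub_neq0 // eq_sym.
  by rewrite -mulrN -invrN opprB.
have := prodrN [pred s | (s != k) && (s != j)] (fun s => (T k - T s) / (T j - T s)).
rewrite cardij //.
move=> /= ->; congr (_ * _); apply: eq_bigl => s; rewrite inE /= eq_sym //.
Qed.
End P3.

Lemma part3 n (hn : (3 <= n)%N) (k l : 'I_n) :
  pairing (gamma k) (gamma l) = (-1) ^+ (n - 2) * (k == l)%:R.
Proof.
rewrite /pairing; have [<-|kl] := eqVneq k l; last first.
  rewrite mulr0; apply: big1 => i _; apply: big1 => j _.
  rewrite /gamma; have [->|ik] := eqVneq i k.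
    by rewrite (negPf kl) mulr0 rmorph0 mul0r.
  by rewrite mul0r rmorph0 mul0r.
rewrite mulr1 (bigD1 k) //= [X in _ + X]big1 ?addr0; last first.
  by move=> i ik; apply: big1 => j _; rewrite /gamma (negPf ik) mul0r rmorph0 mul0r.
rewrite (eq_bigr (fun j => (-1) ^+ (n - 2) * \prod_(s | (k != s) && (s != j))
   ((tofrac ('X_k : Zt n) - tofrac ('X_s : Zt n)) / (tofrac ('X_j : Zt n) - tofrac ('X_s : Zt n))))); last first.
  move=> j kj; rewrite /gamma; case: eqP => // _; exact: term_eq.
rewrite -mulr_sumr.
rewrite (@lagr _ _ (fun j => k != j) (fun i => tofrac ('X_i : Zt n)) _) ?mulr1 //.
  by move=> a b _ _; apply: T_inj.
rewrite (eq_card (B := predC1 k)) ?cardC1 ?card_ord; first lia.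
by move=> s; rewrite !inE eq_sym.
Qed.

Unset Implicit Arguments.
Theorem lemma4p1 (n : nat) (hn : (3 <= n)%N) :
  (forall l : 'I_n, inCH (n - 2) (gamma l)) /\
  (forall (s : 'S_n) (l : 'I_n), s \in <[cyc n]>%g ->
     forall i j : 'I_n, i != j -> monodromy s (gamma l) i j = gamma (s l) i j) /\
  (forall k l : 'I_n,
     pairing (gamma k) (gamma l) = (-1) ^+ (n - 2) * (k == l)%:R).
Proof.
split; first exact: part1.
split; last exact: part3.
by move=> s l _ i j _; apply: part2.
Qed.
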